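(* Let $q > 1$ be an integer. For all positive integers $n$ and $M$, if $W$ is chosen uniformly at random from $\{x_0,\ldots,x_{q-1}\}^M$, then $$\Pr\left(W \in C(n,q,M)\right) \leq \left(\frac{q}{q-1}\right)^{n-1}q^{-2^n+n+1}.$$
   Context: Fix the alphabet $\{x_0,\ldots,x_{q-1}\}$ of $q$ letters. A word $W$ is an instance of a word $V = y_0y_1\cdots y_{m-1}$ (each $y_i$ a letter) if $W = A_0A_1\cdots A_{m-1}$ with each $A_i$ a nonempty word and $A_i = A_j$ whenever $y_i = y_j$. The Zimin words are defined by $Z_0 := \varepsilon$ (the empty word) and $Z_{n+1} := Z_n z_n Z_n$ for distinct letters $z_0,z_1,\dots$. $C(n,q,M)$ denotes the set of words $W \in \{x_0,\ldots,x_{q-1}\}^M$ that are instances of $Z_n$. *)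

(* Defs.v *)
From mathcomp Require Import all_boot all_order all_algebra.
From Stdlib Require Import ClassicalEpsilon.
Set Implicit Arguments.
Unset Strict Implicit.
Unset Printing Implicit Defensive.

(* Zimin words over the letters z_0, z_1, ... encoded as nat:
   Z_0 = [::], Z_{n+1} = Z_n ++ [:: n] ++ Z_n. *)
Fixpoint zimin (n : nat) : seq nat :=
  if n is n'.+1 then zimin n' ++ n' :: zimin n' else [::].

(* W is an instance of V = y_0 ... y_{m-1}: W = A_0 ... A_{m-1} with each
   A_i nonempty and A_i = A_j whenever y_i = y_j. *)
Definition instance_of (A : eqType) (L : eqType) (W : seq A) (V : seq L) : Prop :=
  exists As : seq (seq A),
    [/\ size As = size V,
        all (fun a => a != [::]) As,
        W = flatten As &
        forall i j, i < size V -> j < size V ->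
          nth None (map Some V) i = nth None (map Some V) j ->
          nth [::] As i = nth [::] As j].

(* Boolean reflection of instance_of (classical), so it can define a finset. *)
Definition instanceb (A L : eqType) (W : seq A) (V : seq L) : bool :=
  if excluded_middle_informative (instance_of W V) then true else false.

Definition Cset (n q M : nat) : {set M.-tuple 'I_q} :=
  [set W : M.-tuple 'I_q | instanceb (tval W) (zimin n)].

(* Main.v *)
Require Import Defs.
From mathcomp Require Import all_boot all_order all_algebra.
From mathcomp Require Import zify ring.
From Stdlib Require Import ClassicalEpsilon.
Import Order.TTheory GRing.Theory Num.Theory.

Lemma size_zimin n : size (zimin n) = (2 ^ n).-1.
Proof.
elim: n => [//|n IH] /=.
rewrite size_cat /= IH expnS.
have := expn_gt0 2 n; lia.
Qed.

Lemma instance_size (A L : eqType) (W : seq A) (V : seq L) :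
  instance_of W V -> size V <= size W.
Proof.
case=> As [<- Hne -> _].
elim: As Hne => [//|a As IH] /= /andP[Ha H].
rewrite size_cat; have := IH H; case: a Ha => //= ? ? _; lia.
Qed.

Lemma instanceP (A L : eqType) (W : seq A) (V : seq L) :
  instanceb W V = true <-> instance_of W V.
Proof. by rewrite /instanceb; case: excluded_middle_informative. Qed.

Lemma zimin_dec (A : eqType) (W : seq A) n :
  instance_of W (zimin n.+1) ->
  exists U x, [/\ W = U ++ x ++ U, x != [::] & instance_of U (zimin n)].
Proof.
case=> As [HsA Hne HW Hc].
have [m Hm] : exists m, size (zimin n) = m by eexists.
have Hs : size (zimin n.+1) = (m + m).+1 by rewrite /= size_cat /= Hm; lia.
rewrite Hs in HsA Hc.
have Hnth : forall i, i < m -> nth 0 (zimin n.+1) i = nth 0 (zimin n.+1) (m.+1 + i).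
  move=> i Hi /=; rewrite !nth_cat Hm Hi.
  have -> : (m.+1 + i < m) = false by lia.
  have -> : m.+1 + i - m = i.+1 by lia.
  by [].
set As1 := take m As.
have HAs : As = As1 ++ nth [::] As m :: As1.
  rewrite -{1}(cat_take_drop m As) (drop_nth [::]); last by lia.
  congr (_ ++ _ :: _).
  apply: (@eq_from_nth _ [::]).
    by rewrite size_drop size_take HsA; case: ifP => H; lia.
  move=> i; rewrite size_drop HsA => Hi.
  rewrite nth_drop nth_take; last by lia.
  symmetry; apply: Hc; try lia.
  rewrite !(nth_map 0) ?Hs; try lia.
  by rewrite -Hnth //; lia.
exists (flatten As1), (nth [::] As m); split.
- by rewrite HW {1}HAs flatten_cat /=.
- by apply: (allP Hne); apply: mem_nth; rewrite HsA; lia.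
- exists As1; split.
    by rewrite size_take HsA Hm; case: ifP => H; lia.
  + by apply/allP => a Ha; apply: (allP Hne); apply: mem_take Ha.
  + by [].
  + move=> i j Hi Hj Hij.
    rewrite Hm in Hi Hj.
    rewrite /As1 !nth_take //.
    apply: Hc; try lia.
    rewrite !(nth_map 0) ?Hs; try lia.
    rewrite !(nth_map 0) ?Hm // in Hij.
    by rewrite /= !nth_cat Hm Hi Hj.
Qed.

Section Count.
Variables (q : nat) (x0 : 'I_q).

Lemma card_le_all M (A : {set M.-tuple 'I_q}) : #|A| <= q ^ M.
Proof. by apply: leq_trans (max_card _) _; rewrite card_tuple card_ord. Qed.

Definition Sk n M k : {set M.-tuple 'I_q} :=
  [set W : M.-tuple 'I_q | instanceb (take k W) (zimin n) &&
                            (drop (M - k) W == take k W)].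

Lemma cover n M :
  Cset n.+1 q M \subset
  \bigcup_(k < M | (k.*2 < M) && ((2 ^ n).-1 <= k)) Sk n M k.
Proof.
apply/subsetP => W; rewrite inE => /instanceP /zimin_dec [U [x [HW Hx HU]]].
have HM : size W = M by rewrite size_tuple.
have Hxs : 0 < size x by case: (x) Hx.
have Hk : size U < M.
  move: HM Hxs; rewrite HW !size_cat; move: (size x) (size U) => a b; lia.
apply/bigcupP; exists (Ordinal Hk) => /=.
  have := @instance_size _ _ _ _ HU; rewrite size_zimin => ->.
  move: HM Hxs; rewrite HW !size_cat /= andbT; move: (size x) (size U) => a b; lia.
rewrite inE HW take_size_cat //.
have -> : M - size U = size (U ++ x) by move: HM; rewrite HW !size_cat; move: (size x) (size U) => a b; lia.
by rewrite catA drop_size_cat // eqxx andbT; apply/instanceP.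
Qed.

Lemma card_Sk n M k : k.*2 <= M ->
  #|Sk n M k| <= #|Cset n q k| * q ^ (M - k.*2).
Proof.
move=> HkM.
pose u0 := [tuple of nseq k x0].
pose v0 := [tuple of nseq (M - k.*2) x0].
pose f (W : M.-tuple 'I_q) :=
  (insubd u0 (take k W), insubd v0 (take (M - k.*2) (drop k W))).
have Hv1 (W : M.-tuple 'I_q) : val (insubd u0 (take k W)) = take k W.
  rewrite val_insubd size_takel ?eqxx // size_tuple; lia.
have Hv2 (W : M.-tuple 'I_q) :
   val (insubd v0 (take (M - k.*2) (drop k W))) = take (M - k.*2) (drop k W).
  rewrite val_insubd size_takel ?eqxx // size_drop size_tuple; lia.
have Hdec (W : M.-tuple 'I_q) : W \in Sk n M k ->
    val W = take k W ++ take (M - k.*2) (drop k W) ++ take k W.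
  rewrite inE => /andP[_ /eqP E].
  transitivity (take k W ++ take (M - k.*2) (drop k W) ++ drop (M - k) W);
    last by rewrite E.
  have -> : M - k = M - k.*2 + k by lia.
  by rewrite -drop_drop !cat_take_drop.
have Hinj : {in Sk n M k &, injective f}.
  move=> W1 W2 H1 H2 [E1 E2]; apply: val_inj.
  by rewrite /= (Hdec _ H1) (Hdec _ H2) -Hv1 E1 Hv1 -Hv2 E2 Hv2.
rewrite -(card_in_imset Hinj).
have -> : q ^ (M - k.*2) = #|[set: (M - k.*2).-tuple 'I_q]|
  by rewrite cardsT card_tuple card_ord.
rewrite -cardsX; apply: subset_leq_card; apply/subsetP => p /imsetP [W HW ->].
rewrite !inE andbT /= Hv1.
by move: HW; rewrite inE => /andP[].
Qed.

Lemma card_bigcup_le n M (P : pred 'I_M) (F : 'I_M -> {set n.-tuple 'I_q}) :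
  #|\bigcup_(k | P k) F k| <= \sum_(k | P k) #|F k|.
Proof.
elim/big_rec2: _ => [|i b B _ Hb]; first by rewrite cards0.
apply: leq_trans (leq_card_setU _ B).1 _.
exact: leq_add.
Qed.

Lemma step_count n M :
  #|Cset n.+1 q M| <=
  \sum_(k < M | (k.*2 < M) && ((2 ^ n).-1 <= k)) #|Cset n q k| * q ^ (M - k.*2).
Proof.
apply: leq_trans (subset_leq_card (cover n M)) _.
apply: leq_trans (@card_bigcup_le M M (fun k : 'I_M => (k.*2 < M) && ((2 ^ n).-1 <= k)) (Sk n M)) _.
apply: leq_sum => k /andP[Hk _]; apply: card_Sk; lia.
Qed.
End Count.
Local Open Scope ring_scope.

Lemma geom (R : realFieldType) (r : R) (a M : nat) : 0 <= r -> r < 1 ->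
  \sum_(k < M | (a <= k)%N) r ^+ k <= r ^+ a / (1 - r).
Proof.
move=> r0 r1.
have H1 : 0 < 1 - r by rewrite subr_gt0.
have key : (\sum_(k < M | (a <= k)%N) r ^+ k) * (1 - r) <= r ^+ a - r ^+ (maxn a M).
  elim: M => [|M IH]; first by rewrite big_ord0 mul0r maxn0 subrr.
  rewrite big_mkcond big_ord_recr /= -big_mkcond /= mulrDl.
  case: (leqP a M) => HaM.
  - have -> : maxn a M.+1 = M.+1 by apply/maxn_idPr; lia.
    have E : maxn a M = M by apply/maxn_idPr.
    rewrite E in IH.
    apply: le_trans (lerD IH (lexx _)) _.
    by rewrite mulrBr mulr1 -exprSr addrA subrK.
  - have -> : maxn a M.+1 = a by apply/maxn_idPl; lia.
    have E : maxn a M = a by apply/maxn_idPl; lia.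
    rewrite E in IH; by rewrite mul0r addr0.
rewrite ler_pdivlMr //; apply: le_trans key _.
by rewrite lerBlDr lerDl exprn_ge0.
Qed.

Section Main.
Variables (R : realFieldType) (q : nat) (x0 : 'I_q).
Hypothesis q1 : (1 < q)%N.
Let Q : R := q%:R.
Let r : R := Q^-1.
Let c : R := Q / (Q - 1).

Lemma Q_gt0 : 0 < Q. Proof. by rewrite /Q ltr0n; lia. Qed.
Lemma Q_gt1 : 1 < Q. Proof. by rewrite /Q ltr1n. Qed.

Lemma Qr k M : (k.*2 <= M)%N -> Q ^+ k * Q ^+ (M - k.*2) = Q ^+ M * r ^+ k.
Proof.
move=> HkM.
have -> : M = (M - k.*2 + k + k)%N by lia.
have Qk : Q ^+ k != 0 by rewrite expf_neq0 // gt_eqF // Q_gt0.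
rewrite /r exprVn !exprD mulfK //.
have -> : (M - k.*2 + k + k - k.*2 = M - k.*2)%N by lia.
by rewrite mulrC.
Qed.

Lemma r_ge0 : 0 <= r. Proof. by rewrite /r invr_ge0 ltW // Q_gt0. Qed.

Definition Bn n : R := c ^+ n * r ^+ (2 ^ n.+1 - n.+2).

Lemma Bn_ge0 n : 0 <= Bn n.
Proof.
rewrite /Bn mulr_ge0 // exprn_ge0 //.
  rewrite /c divr_ge0 ?subr_ge0 ?(ltW Q_gt1) //; exact: ltW Q_gt0.
by rewrite /r invr_ge0 ltW // Q_gt0.
Qed.

Lemma main_bound n M : #|Cset n.+1 q M|%:R <= Bn n * Q ^+ M.
Proof.
elim: n M => [|n IH] M.
  rewrite /Bn /=.
  have -> : (2 ^ 1 - 2 = 0)%N by [].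
  by rewrite !expr0 !mul1r /Q -natrX ler_nat card_le_all.
have H := @step_count q x0 n.+1 M; rewrite -(ler_nat R) in H.
apply: le_trans H _.
rewrite natr_sum.
set a := (2 ^ n.+1).-1.
apply: le_trans (_ : \sum_(k < M | (k.*2 < M)%N && (a <= k)%N) Bn n * Q ^+ M * r ^+ k <= _).
  apply: ler_sum => k /andP[Hk _].
  rewrite natrM natrX -/Q -mulrA -Qr; last by lia.
  rewrite mulrA; apply: ler_wpM2r; [exact: exprn_ge0 (ltW Q_gt0) | exact: IH].
apply: le_trans (_ : \sum_(k < M | (a <= k)%N) Bn n * Q ^+ M * r ^+ k <= _).
  rewrite [X in X <= _]big_mkcond [X in _ <= X]big_mkcond /=.
  apply: ler_sum => k _.
  case: (a <= k)%N; rewrite ?andbT ?andbF //.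
  case: ifP => _ //.
  apply: mulr_ge0; [apply: mulr_ge0; [exact: Bn_ge0 | exact: exprn_ge0 (ltW Q_gt0)] | exact: exprn_ge0 r_ge0].
rewrite -mulr_sumr.
have r0 : 0 <= r by rewrite /r invr_ge0 ltW // Q_gt0.
have r1 : r < 1 by rewrite /r invf_lt1 ?Q_gt0 ?Q_gt1.
have BQ : 0 <= Bn n * Q ^+ M by apply: mulr_ge0; [exact: Bn_ge0 | exact: exprn_ge0 (ltW Q_gt0)].
apply: le_trans (ler_wpM2l BQ (@geom R r a M r0 r1)) _.
have Ec : 1 / (1 - r) = c.
  rewrite /c /r.
  have Q0 : Q != 0 by rewrite gt_eqF // Q_gt0.
  have Q10 : Q - 1 != 0 by rewrite subr_eq0 gt_eqF // Q_gt1.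
  by field; rewrite Q10 Q0.
rewrite /Bn.
have ex : (2 ^ n.+2 - n.+3 = (2 ^ n.+1 - n.+2) + a)%N.
  have := ltn_expl n.+1 (isT : (1 < 2)%N).
  rewrite /a !expnS; lia.
rewrite ex exprD exprS.
set t := c ^+ n.
rewrite -Ec.
rewrite le_eqVlt; apply/orP; left; apply/eqP.
set u := r ^+ _; set v := r ^+ a; set w := Q ^+ M.
ring.
Qed.
End Main.

Theorem mainTheorem6 (R : realFieldType) (q n M : nat) :
  (1 < q)%N -> (0 < n)%N -> (0 < M)%N ->
  (#|Cset n q M|%:R
     / (q ^ M)%:R : R)
  <= (q%:R / (q%:R - 1)) ^+ n.-1 * (q%:R : R) ^ (- (2 ^ n)%:Z + n%:Z + 1).
Proof.
move=> q1 n0 _.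
pose x0 : 'I_q := Ordinal (ltnW q1).
case: n n0 => // n _ /=.
have Ez : (- (2 ^ n.+1)%:Z + n.+1%:Z + 1 = - ((2 ^ n.+1 - n.+2)%N)%:Z)%R.
  have h := ltn_expl n.+1 (isT : (1 < 2)%N).
  move: (2 ^ n.+1)%N h => t h; lia.
have Qp : (0 : R) < q%:R by rewrite ltr0n; lia.
rewrite Ez -invr_expz -exprVn.
rewrite ler_pdivrMr; last by rewrite ltr0n expn_gt0; apply/orP; left; lia.
rewrite natrX.
exact: (@main_bound R q x0 q1 n M).
Qed.
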